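(* Let $d\ge2$, $n\ge1$, and $k\ge 2\lceil\frac{n}{2d-2}\rceil$. Then for every $\mathbf{y}\in\{-1,1\}^n$ and for Lebesgue-almost every $X\in\mathbb{R}^{d\times n}$, there exist $\tilde W\in\mathbb{R}^{2k\times d}$ and $\tilde v>0$ such that, with $\tilde{\mathbf{v}}=(\tilde v,\dots,\tilde v,-\tilde v,\dots,-\tilde v)\in\mathbb{R}^{2k}$ ($k$ entries $\tilde v$ followed by $k$ entries $-\tilde v$), one has $\mathbf{y}=\tilde{\mathbf{v}}^\top\sigma(\tilde WX)$.
   Context: $\sigma(z)=\max\{\alpha z,z\}$ with a fixed $0<\alpha<1$ (Leaky ReLU), applied entrywise; the columns of $X$ are the data points, so $\tilde{\mathbf{v}}^\top\sigma(\tilde WX)\in\mathbb{R}^{1\times n}$ is the vector of network outputs on the $n$ points. *)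

(* Defs.v *)
From mathcomp Require Import all_boot all_order all_algebra.
From mathcomp Require Import reals.
Set Implicit Arguments. Unset Strict Implicit. Unset Printing Implicit Defensive.
Import Order.TTheory GRing.Theory Num.Theory.
Local Open Scope ring_scope.

Definition leaky_relu (R : realType) (alpha : R) (z : R) : R := Num.max (alpha * z) z.

Definition sigma_mx (R : realType) (alpha : R) (m n : nat) (A : 'M[R]_(m, n)) : 'M[R]_(m, n) :=
  map_mx (leaky_relu alpha) A.

Definition ceildiv (a b : nat) : nat := ((a + b.-1) %/ b)%N.

Definition pm_vec (R : realType) (k : nat) (v : R) : 'rV[R]_(2 * k) :=
  \row_(i < 2 * k) (if (i < k)%N then v else - v).

Definition in_box (R : realType) (d n : nat) (a b X : 'M[R]_(d, n)) : Prop :=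
  forall i j, a i j <= X i j /\ X i j <= b i j.

Definition box_vol (R : realType) (d n : nat) (a b : 'M[R]_(d, n)) : R :=
  \prod_(i < d) \prod_(j < n) (b i j - a i j).

Definition lebesgue_null (R : realType) (d n : nat) (N : 'M[R]_(d, n) -> Prop) : Prop :=
  forall eps : R, 0 < eps ->
    exists a b : nat -> 'M[R]_(d, n),
      (forall m i j, a m i j <= b m i j) /\
      (forall X, N X -> exists m, in_box (a m) (b m) X) /\
      (forall M : nat, \sum_(m < M) box_vol (a m) (b m) <= eps).

(* Main.v *)
Require Import Defs.
From mathcomp Require Import all_boot all_order all_algebra.
From mathcomp Require Import reals.
From mathcomp Require Import ring lra zify.
From mathcomp Require Import fingroup perm.
From Stdlib Require Import ClassicalEpsilon Classical.
Import Order.TTheory GRing.Theory Num.Theory.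
Local Open Scope ring_scope.
Set Implicit Arguments. Unset Strict Implicit. Unset Printing Implicit Defensive.

(* Proof strategy:
   - the non-generic set (some square minor of X vanishes) is Lebesgue-null
     (cover by small boxes, using the cofactor expansion and Lipschitz bounds
     on determinants);
   - for generic X, an explicit construction using k pairs of neurons whose
     hyperplanes form a pencil, interpolating blocks of <= d points. *)

Definition null2 (R : realType) (d n : nat) (N : 'M[R]_(d,n) -> Prop) : Prop :=
  forall eps : R, 0 < eps -> exists a b : nat -> 'M[R]_(d,n),
    (forall m i j, a m i j <= b m i j) /\
    (forall X, N X -> exists m, in_box (a m) (b m) X) /\
    (forall t : seq nat, uniq t -> \sum_(m <- t) box_vol (a m) (b m) <= eps).

Lemma null2_null (R : realType) d n (N : 'M[R]_(d,n) -> Prop) :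
  null2 N -> lebesgue_null N.
Proof.
move=> H eps He; have [a [b [h1 [h2 h3]]]] := H eps He.
exists a, b; split=>//; split=>// M.
rewrite -(big_mkord xpredT (fun m => box_vol (a m) (b m))).
by apply: h3; exact: iota_uniq.
Qed.

Lemma null2_sub (R : realType) d n (N N' : 'M[R]_(d,n) -> Prop) :
  (forall X, N X -> N' X) -> null2 N' -> null2 N.
Proof.
move=> HN H eps He; have [a [b [h1 [h2 h3]]]] := H eps He.
exists a, b; split=>//; split=>// X /HN; exact: h2.
Qed.

Lemma box_vol00 (R : realType) d n : (0 < d)%N -> (0 < n)%N ->
  box_vol (0 : 'M[R]_(d,n)) 0 = 0.
Proof.
move=> hd hn; rewrite /box_vol (bigD1 (Ordinal hd)) //= (bigD1 (Ordinal hn)) //=.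
by rewrite !mxE subrr mul0r mul0r.
Qed.

Lemma cover_null2 (R : realType) d n (N : 'M[R]_(d,n) -> Prop) :
  (0 < d)%N -> (0 < n)%N ->
  (forall eps : R, 0 < eps -> exists (I : countType) (a b : I -> 'M[R]_(d,n)),
    (forall m i j, a m i j <= b m i j) /\
    (forall X, N X -> exists m, in_box (a m) (b m) X) /\
    (forall t : seq I, uniq t -> \sum_(m <- t) box_vol (a m) (b m) <= eps)) ->
  null2 N.
Proof.
move=> hd hn H eps He; have [I [a [b [h1 [h2 h3]]]]] := H eps He.
exists (fun m => oapp a 0 (pickle_inv m)), (fun m => oapp b 0 (pickle_inv m)).
split; first by move=> m i j; case: (pickle_inv m) => [x|] //=; rewrite !mxE.
split.
  move=> X /h2 [i Hi]; exists (pickle i); by rewrite pickleK_inv.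
move=> t ut.
have -> : \sum_(m <- t) box_vol (oapp a 0 (pickle_inv m)) (oapp b 0 (pickle_inv m))
   = \sum_(i <- pmap pickle_inv t) box_vol (a i) (b i).
  elim: t {ut} => [|m t IH]; first by rewrite !big_nil.
  rewrite big_cons /=; case: (pickle_inv m) => [x|] /=; first by rewrite big_cons IH.
  by rewrite box_vol00 // add0r.
apply: h3; apply: (pmap_uniq (g := pickle)) => //; exact: pickle_invK.
Qed.

Lemma sum_sub_seq (R : realType) (T : eqType) (t r : seq T) (F : T -> R) :
  uniq t -> uniq r -> {subset t <= r} -> (forall x, 0 <= F x) ->
  \sum_(x <- t) F x <= \sum_(x <- r) F x.
Proof.
move=> ut ur sub F0.
rewrite [X in _ <= X](bigID (fun x => x \in t)) /=.
have -> : \sum_(x <- r | x \in t) F x = \sum_(x <- t) F x.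
  rewrite -big_filter; apply/perm_big.
  apply: uniq_perm => //; first exact: filter_uniq.
  by move=> x; rewrite mem_filter; case xt: (x \in t) => //=; rewrite (sub _ xt).
by rewrite lerDl sumr_ge0.
Qed.

Lemma geo_sum (R : realType) (t : seq nat) : uniq t ->
  \sum_(u <- t) ((2 : R) ^+ u.+1)^-1 <= 1.
Proof.
move=> ut.
have H2 : forall M, \sum_(u <- iota 0 M) ((2 : R) ^+ u.+1)^-1 = 1 - ((2 : R) ^+ M)^-1.
  elim=> [|M IH]; first by rewrite big_nil expr0 invr1 subrr.
  rewrite -addn1 iotaD big_cat /= big_cons big_nil IH add0n addr0 addn1.
  have h2 : (2 : R) != 0 by rewrite pnatr_eq0.
  have hM : (2 : R) ^+ M != 0 by rewrite expf_neq0.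
  rewrite exprS invfM; field; by rewrite ?h2 ?hM.
set M := (\sum_(u <- t) u).+1.
apply: (@le_trans _ _ (\sum_(u <- iota 0 M) ((2 : R) ^+ u.+1)^-1)).
  apply: sum_sub_seq => //; first exact: iota_uniq.
  - move=> u ut'; rewrite mem_iota /= add0n ltnS.
    rewrite (big_rem u) //=; exact: leq_addr.
  - by move=> x; rewrite invr_ge0 exprn_ge0.
by rewrite H2 gerDl oppr_le0 invr_ge0 exprn_ge0.
Qed.

Lemma sum_partition (R : realType) (T I : eqType) (s : seq T) (key : T -> I) (F : T -> R) :
  \sum_(p <- s) F p = \sum_(i <- undup (map key s)) \sum_(p <- s | key p == i) F p.
Proof.
under [RHS]eq_bigr do rewrite big_mkcond.
rewrite exchange_big /=; apply: eq_big_seq => p ps.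
rewrite -big_mkcond /= -big_filter.
have -> : [seq i <- undup [seq key i | i <- s] | key p == i] = [:: key p].
  rewrite -(@filter_pred1_uniq _ (undup (map key s)) (key p)).
  - by apply: eq_filter => i /=; rewrite eq_sym.
  - exact: undup_uniq.
  - by rewrite mem_undup; apply: map_f.
by rewrite big_cons big_nil addr0.
Qed.

Lemma union_null2 (R : realType) d n (I : countType) (N : I -> 'M[R]_(d,n) -> Prop) :
  (0 < d)%N -> (0 < n)%N -> (forall i, null2 (N i)) ->
  null2 (fun X => exists i, N i X).
Proof.
move=> hd hn H.
apply: cover_null2 => // eps He; exists (I * nat)%type.
pose e (i : I) : R := eps / 2 ^+ (pickle i).+1.
have He_i : forall i : I, 0 < e i by move=> i; rewrite divr_gt0 // exprn_gt0.
pose P (i : I) (ab : (nat -> 'M[R]_(d,n)) * (nat -> 'M[R]_(d,n))) :=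
  (forall m i0 j, ab.1 m i0 j <= ab.2 m i0 j) /\
  (forall X, N i X -> exists m, in_box (ab.1 m) (ab.2 m) X) /\
  (forall t, uniq t -> \sum_(m <- t) box_vol (ab.1 m) (ab.2 m) <= e i).
have Hex : forall i : I, exists ab, P i ab.
  by move=> i; have [a [b Hab]] := H i (e i) (He_i i); exists (a, b).
pose f (i : I) := epsilon (inhabits ((fun _ : nat => 0 : 'M[R]_(d,n)), (fun _ : nat => 0 : 'M[R]_(d,n)))) (P i).
have Hf : forall i : I, P i (f i) := fun i => epsilon_spec _ _ (Hex i).
exists (fun p => (f p.1).1 p.2), (fun p => (f p.1).2 p.2).
split; first by move=> [i m] i0 j; have [h _] := Hf i; exact: h.
split.
  move=> X [i Hi]; have [_ [h _]] := Hf i; have [m Hm] := h X Hi; by exists (i, m).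
move=> s us; rewrite (sum_partition s fst).
apply: (@le_trans _ _ (\sum_(i <- undup (map fst s)) e i)).
  apply: ler_sum => i _.
  rewrite -big_filter big_seq.
  rewrite (eq_bigr (fun p : I * nat => box_vol ((f i).1 p.2) ((f i).2 p.2))); last first.
    by move=> p; rewrite mem_filter => /andP [/eqP -> _].
  rewrite -big_seq -(big_map snd xpredT (fun m => box_vol ((f i).1 m) ((f i).2 m))).
  have [_ [_ h]] := Hf i; apply: h.
  rewrite map_inj_in_uniq ?filter_uniq //.
  move=> [a1 b1] [a2 b2]; rewrite !mem_filter /= => /andP [/eqP -> _] /andP [/eqP -> _] ->.
  by [].
rewrite /e -mulr_sumr -[X in _ <= X]mulr1; apply: ler_wpM2l; first exact: ltW.
rewrite -(big_map pickle xpredT (fun u => ((2 : R) ^+ u.+1)^-1)).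
apply: geo_sum; rewrite map_inj_uniq ?undup_uniq //; exact: (pcan_inj (@pickleK_inv I)).
Qed.


Lemma prod_bound (R : realType) s (a : 'I_s -> R) (r : R) :
  0 <= r -> (forall i, `|a i| <= r) -> `|\prod_i a i| <= r ^+ s.
Proof.
move=> r0 ha; rewrite normr_prod.
rewrite -[s in r ^+ s]card_ord -prodr_const.
by apply: ler_prod => i _; rewrite normr_ge0 ha.
Qed.

Lemma prod_lip (R : realType) s (a b : 'I_s -> R) (r h : R) :
  1 <= r -> 0 <= h -> (forall i, `|a i| <= r) -> (forall i, `|b i| <= r) ->
  (forall i, `|a i - b i| <= h) ->
  `|\prod_i a i - \prod_i b i| <= s%:R * r ^+ s * h.
Proof.
elim: s a b => [|s IH] a b r1 h0 ha hb hab.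
  by rewrite !big_ord0 subrr normr0 mul0r mul0r.
rewrite !big_ord_recr /=.
set A := \prod_(i < s) a (widen_ord (leqnSn s) i).
set B := \prod_(i < s) b (widen_ord (leqnSn s) i).
have hA : `|A| <= r ^+ s by apply: prod_bound => //; apply: le_trans r1.
have hAB : `|A - B| <= s%:R * r ^+ s * h by apply: IH.
have hy := hb ord_max; have hxy := hab ord_max.
have -> : A * a ord_max - B * b ord_max = A * (a ord_max - b ord_max) + (A - B) * b ord_max by ring.
apply: (le_trans (ler_normD _ _)); rewrite !normrM.
set p := r ^+ s.
have p0 : 0 <= p by rewrite exprn_ge0 // (le_trans _ r1).
have s0 : 0 <= s%:R :> R by [].
have e1 : `|A| * `|a ord_max - b ord_max| <= p * h.
  by apply: ler_pM => //.
have e2 : `|A - B| * `|b ord_max| <= s%:R * p * h * r.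
  by apply: ler_pM => //.
rewrite exprSr -/p -addn1 natrD.
have : p * h <= p * r * h.
  rewrite -mulrA ler_wpM2l // ler_peMl //.
nra.
Qed.

Lemma det_lip (R : realType) s (P Q : 'M[R]_s) (r h : R) :
  1 <= r -> 0 <= h -> (forall i j, `|P i j| <= r) -> (forall i j, `|Q i j| <= r) ->
  (forall i j, `|P i j - Q i j| <= h) ->
  `|\det P - \det Q| <= (s`!)%:R * (s%:R * r ^+ s * h).
Proof.
move=> r1 h0 hP hQ hPQ.
rewrite /determinant -sumrB.
apply: (le_trans (ler_norm_sum _ _ _)).
apply: (@le_trans _ _ (\sum_(sg : {perm 'I_s}) (s%:R * r ^+ s * h))).
  apply: ler_sum => sg _; rewrite -mulrBr normrM normr_sign mul1r.
  by apply: prod_lip.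
by rewrite sumr_const card_Sn -(mulr_natl (s%:R * r ^+ s * h) s`!).
Qed.


Definition subm (R : realType) d n s (r : 'I_s -> 'I_d) (c : 'I_s -> 'I_n)
  (X : 'M[R]_(d,n)) : 'M[R]_s := \matrix_(i, j) X (r i) (c j).

Definition zero_at (R : realType) d n (e : 'I_d * 'I_n) (X : 'M[R]_(d,n)) : 'M[R]_(d,n) :=
  \matrix_(i, j) (if (i, j) == e then 0 else X i j).

Lemma det_split (R : realType) d n s (r : 'I_s.+1 -> 'I_d) (c : 'I_s.+1 -> 'I_n)
  (X : 'M[R]_(d,n)) : injective r -> injective c ->
  \det (subm r c X) = \det (subm r c (zero_at (r ord_max, c ord_max) X))
     + X (r ord_max) (c ord_max) * \det (subm (r \o lift ord_max) (c \o lift ord_max) X).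
Proof.
move=> ir ic.
set X0 := zero_at _ X.
have hrow : forall j, cofactor (subm r c X) ord_max j = cofactor (subm r c X0) ord_max j.
  move=> j; rewrite /cofactor; congr (_ * \det _); apply/matrixP => a b; rewrite !mxE.
  case: eqP => // -[/ir/eqP]; by rewrite eq_sym (negbTE (neq_lift _ _)).
rewrite !(expand_det_row _ ord_max) (bigD1 ord_max) //= [in X in _ = X + _](bigD1 ord_max) //=.
have -> : \sum_(i < s.+1 | i != ord_max) subm r c X ord_max i * cofactor (subm r c X) ord_max i
   = \sum_(i < s.+1 | i != ord_max) subm r c X0 ord_max i * cofactor (subm r c X0) ord_max i.
  apply: eq_bigr => j hj; rewrite hrow !mxE.
  case: eqP => [[] /ic hj'|//]; by rewrite hj' eqxx in hj.
rewrite -hrow !mxE eqxx mul0r add0r addrC; congr (_ + _); congr (_ * _).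
rewrite /cofactor -signr_odd oddD addbb expr0 mul1r; congr (\det _).
by apply/matrixP => a b; rewrite !mxE.
Qed.


Definition bnd (R : realType) d n (rho : nat) (X : 'M[R]_(d,n)) :=
  forall i j, `|X i j| <= rho%:R.

Lemma trunc_cell (R : realType) (u : R) (L : nat) : (0 < L)%N -> 0 <= u -> u <= L%:R ->
  let l := minn (Num.trunc u) L.-1 in (l < L)%N /\ l%:R <= u /\ u <= l%:R + 1.
Proof.
move=> L0 u0 uL l; have /andP [t1 t2] := truncn_itv u0.
have lL : (l < L)%N by rewrite /l gtn_min ltn_predL L0 orbT.
split=> //; rewrite /l /minn; case: ltnP => H.
  by split=> //; rewrite natr1 ltW.
split; first by apply: le_trans t1; rewrite ler_nat.
by rewrite natr1 prednK.
Qed.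

Lemma min_lt (t L : nat) : (0 < L)%N -> (minn t L.-1 < L)%N.
Proof. by move=> L0; rewrite gtn_min ltn_predL L0 orbT. Qed.

Lemma graph_null2 (R : realType) d n (e : 'I_d * 'I_n) (A B : 'M[R]_(d,n) -> R)
  (rho : nat) (K : R) :
  (0 < d)%N -> (0 < n)%N -> (0 < rho)%N -> 0 <= K ->
  (forall X Y (h : R), 0 <= h -> bnd rho X -> bnd rho Y ->
     (forall p, p != e -> `|X p.1 p.2 - Y p.1 p.2| <= h) ->
     `|A X - A Y| <= K * h /\ `|B X - B Y| <= K * h) ->
  null2 (fun X => bnd rho X /\ rho%:R^-1 <= `|A X| /\ A X * X e.1 e.2 + B X = 0).
Proof.
move=> hd hn hr K0 Hlip.
set G := fun X => _.
apply: cover_null2 => // eps He.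
set r : R := rho%:R.
have r1 : 1 <= r by rewrite ler1n.
set C : R := r * (K + K * r).
have r0 : 0 <= r by rewrite ler0n.
have C0 : 0 <= C by rewrite mulr_ge0 ?addr_ge0 ?mulr_ge0.
set V : R := 2 * C * (2 * r) ^+ (d * n).
have V0 : 0 <= V.
  by apply: mulr_ge0; [apply: mulr_ge0 | apply: exprn_ge0; apply: mulr_ge0].
set Nn : nat := (Num.Def.archi_bound (V / eps)).+1.
have Nn0 : (0 < Nn)%N by [].
set h : R := Nn%:R^-1.
have h0 : 0 <= h by rewrite invr_ge0 ler0n.
have hV : V * h <= eps.
  have H1 := archi_boundP (divr_ge0 V0 (ltW He)).
  have H2 : V / eps <= Nn%:R.
    by rewrite /Nn -natr1; apply: ltW; apply: (lt_le_trans H1); rewrite lerDl.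
  by rewrite /h ler_pdivrMr ?ltr0n // mulrC -ler_pdivrMr.
set L : nat := (2 * rho * Nn)%N.
have L0 : (0 < L)%N by rewrite /L !muln_gt0 hr.
set del : R := C * h.
set lo := fun (q : {ffun 'I_d * 'I_n -> 'I_L}) (p : 'I_d * 'I_n) => - r + (q p)%:R * h.
set incell := fun (q : {ffun 'I_d * 'I_n -> 'I_L}) (Y : 'M[R]_(d,n)) =>
  forall p, p != e -> lo q p <= Y p.1 p.2 <= lo q p + h.
set ctr := fun q => (epsilon (inhabits (0 : 'M[R]_(d,n))) (fun Y => G Y /\ incell q Y)) e.1 e.2.
have Hdel : 0 <= del by rewrite mulr_ge0.
have hN : Nn%:R * h = 1 by rewrite /h mulfV // pnatr_eq0 -lt0n.
exists {ffun 'I_d * 'I_n -> 'I_L}.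
pose a (q : {ffun 'I_d * 'I_n -> 'I_L}) (i : 'I_d) (j : 'I_n) := if (i, j) == e then (if val (q e) == 0%N then ctr q - del else 0)
   else lo q (i, j).
pose b (q : {ffun 'I_d * 'I_n -> 'I_L}) (i : 'I_d) (j : 'I_n) := if (i, j) == e then (if val (q e) == 0%N then ctr q + del else 0)
   else lo q (i, j) + h.
exists (fun q => \matrix_(i, j) a q i j), (fun q => \matrix_(i, j) b q i j).
split.
  move=> q i j; rewrite !mxE /a /b; case: ifP => _; last by rewrite lerDl.
  case: ifP => _ //; lra.
split.
  move=> X GX; have [bX [aX eX]] := GX.
  pose q := [ffun p : 'I_d * 'I_n => if p == e then Ordinal L0
            else Ordinal (min_lt (Num.trunc ((X p.1 p.2 + r) * Nn%:R)) L0)].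
  have incX : incell q X.
    move=> p pe; rewrite /lo ffunE (negbTE pe) /=.
    set u := (X p.1 p.2 + r) * Nn%:R.
    have bp := bX p.1 p.2; move: bp; rewrite ler_norml => /andP [bp1 bp2].
    have u0 : 0 <= u by rewrite mulr_ge0 // -(opprK r) subr_ge0.
    have uL : u <= L%:R.
      rewrite /L !natrM -/r /u ler_wpM2r // mulr_natl mulr2n lerD //.
    have [_ [l1 l2]] := trunc_cell L0 u0 uL.
    have Xe : X p.1 p.2 = u * h - r.
      by rewrite /u -mulrA hN mulr1 addrK.
    rewrite Xe; apply/andP; split.
      by rewrite addrC lerD2r ler_wpM2r.
    have := ler_wpM2r h0 l2; rewrite mulrDl mul1r; lra.
  set Y := epsilon (inhabits (0 : 'M[R]_(d,n))) (fun Y => G Y /\ incell q Y).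
  have [GY incY] : G Y /\ incell q Y.
    exact: (@epsilon_spec _ (inhabits (0 : 'M[R]_(d,n))) (fun Y => G Y /\ incell q Y) (ex_intro _ X (conj GX incX))).
  have [bY [aY eY]] := GY.
  have hXY : forall p, p != e -> `|X p.1 p.2 - Y p.1 p.2| <= h.
    move=> p pe; have /andP [x1 x2] := incX p pe; have /andP [y1 y2] := incY p pe.
    rewrite ler_norml; apply/andP; split; lra.
  have [hA hB] := Hlip X Y h h0 bX bY hXY.
  have hE : `|X e.1 e.2 - Y e.1 e.2| <= del.
    have key : A X * (X e.1 e.2 - Y e.1 e.2) = (B Y - B X) + (A Y - A X) * Y e.1 e.2.
      rewrite mulrBr mulrBl; lra.
    have hYe : `|Y e.1 e.2| <= r := bY _ _.
    have H1 : `|A X| * `|X e.1 e.2 - Y e.1 e.2| <= K * h + K * h * r.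
      rewrite -normrM key; apply: le_trans (ler_normD _ _) _; rewrite normrM.
      apply: lerD; first by rewrite distrC.
      by apply: ler_pM => //; rewrite distrC.
    set z := `|X e.1 e.2 - Y e.1 e.2|.
    have rne0 : r != 0 by rewrite pnatr_eq0 -lt0n.
    have hz : z <= r * (`|A X| * z).
      rewrite -[z in z <= _]mul1r -(mulfV rne0) -mulrA ler_wpM2l // ler_wpM2r //.
      exact: normr_ge0.
    suff -> : del = r * (K * h + K * h * r) by apply: (le_trans hz); rewrite ler_wpM2l.
    by rewrite /del /C; ring.
  exists q => i j; rewrite !mxE /a /b.
  case: eqP => [Hij|Hij].
    rewrite ffunE eqxx /= /ctr -/Y.
    move: hE; rewrite -Hij /= ler_norml => /andP [h1 h2]; split; lra.
  have pe : (i, j) != e by apply/eqP.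
  by have /andP [] := incX (i, j) pe.
move=> t ut.
pose side (p : 'I_d * 'I_n) (t0 : 'I_L) : R :=
  if p == e then (if val t0 == 0%N then 2 * del else 0) else h.
have Hvol : forall q, box_vol (\matrix_(i, j) a q i j) (\matrix_(i, j) b q i j)
    = \prod_p side p (q p).
  move=> q; rewrite /box_vol pair_bigA /=; apply: eq_bigr => -[i j] _.
  rewrite !mxE /a /b /side /=.
  case: eqP => [<-|_]; last by rewrite addrAC subrr add0r.
  by case: ifP => _; [ring | rewrite subrr].
have Hvol0 : forall q, 0 <= box_vol (\matrix_(i, j) a q i j) (\matrix_(i, j) b q i j).
  move=> q; rewrite Hvol; apply: prodr_ge0 => p _; rewrite /side.
  by case: ifP => _ //; case: ifP => _ //; rewrite mulr_ge0.
apply: (@le_trans _ _ (\sum_(q <- enum {ffun 'I_d * 'I_n -> 'I_L})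
   box_vol (\matrix_(i, j) a q i j) (\matrix_(i, j) b q i j))).
  apply: sum_sub_seq => //; [exact: enum_uniq | by move=> q _; rewrite mem_enum].
rewrite big_enum /=.
under eq_bigr do rewrite Hvol.
rewrite -bigA_distr_bigA /=.
have Hs : forall p, \sum_(t0 : 'I_L) side p t0 = if p == e then 2 * del else 2 * r.
  move=> p; rewrite /side; case: eqP => _.
    rewrite (bigD1 (Ordinal L0)) //= big1 ?addr0 //.
    by move=> t0; rewrite -val_eqE /= => /negbTE ->.
  by rewrite sumr_const card_ord -(mulr_natl h L) /L !natrM -/r -mulrA hN mulr1.
under eq_bigr do rewrite Hs.
rewrite (bigD1 e) //= eqxx.
under eq_bigr => p pe do rewrite (negbTE pe).
rewrite prodr_const.
apply: le_trans hV; rewrite /V /del.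
have : (2 * r) ^+ #|[pred p | p != e]| <= (2 * r) ^+ (d * n).
  apply: ler_weXn2l; first lra.
  by apply: (leq_trans (max_card _)); rewrite card_prod !card_ord.
have := mulr_ge0 C0 h0.
set x := _ ^+ #|_|; set y := _ ^+ (d * n).
nra.
Qed.


Lemma null2_empty (R : realType) d n : (0 < d)%N -> (0 < n)%N ->
  null2 (fun _ : 'M[R]_(d,n) => False).
Proof.
move=> hd hn eps He; exists (fun _ => 0), (fun _ => 0); split=> //; split=> // t _.
by rewrite big1 ?ltW // => m _; rewrite box_vol00.
Qed.

Lemma null2_union2 (R : realType) d n (P Q : 'M[R]_(d,n) -> Prop) :
  (0 < d)%N -> (0 < n)%N -> null2 P -> null2 Q -> null2 (fun X => P X \/ Q X).
Proof.
move=> hd hn hP hQ.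
apply: (null2_sub (N' := fun X => exists b : bool, (if b then P else Q) X)).
  by move=> X [HP|HQ]; [exists true | exists false].
by apply: union_null2 => // -[].
Qed.

Lemma le_sum1 (R : realType) (I : finType) (F : I -> R) i :
  (forall j, 0 <= F j) -> F i <= \sum_j F j.
Proof. by move=> F0; rewrite (bigD1 i) //= lerDl sumr_ge0. Qed.

Lemma det_zero_null (R : realType) d n s (r : 'I_s -> 'I_d) (c : 'I_s -> 'I_n) :
  (0 < d)%N -> (0 < n)%N -> injective r -> injective c ->
  null2 (fun X : 'M[R]_(d,n) => \det (subm r c X) = 0).
Proof.
move=> hd hn; elim: s r c => [|s IH] r c ir ic.
  apply: (null2_sub (N' := fun _ => False)); last exact: null2_empty.
  by move=> X; rewrite det_mx00 => /eqP; rewrite oner_eq0.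
set r' := r \o lift ord_max; set c' := c \o lift ord_max.
have ir' : injective r' by apply: inj_comp => //; exact: lift_inj.
have ic' : injective c' by apply: inj_comp => //; exact: lift_inj.
set e := (r ord_max, c ord_max).
pose A (X : 'M[R]_(d,n)) := \det (subm r' c' X).
pose B (X : 'M[R]_(d,n)) := \det (subm r c (zero_at e X)).
pose G (rho : nat) X := bnd rho.+1 X /\ (rho.+1%:R)^-1 <= `|A X| /\ A X * X e.1 e.2 + B X = 0.
apply: (null2_sub (N' := fun X => A X = 0 \/ exists rho, G rho X)).
  move=> X hX; case: (eqVneq (A X) 0) => hA; [by left | right].
  pose S := \sum_i \sum_j `|X i j|.
  have S0 : 0 <= S by rewrite sumr_ge0 // => i _; rewrite sumr_ge0.
  have iA0 : 0 <= `|A X|^-1 by rewrite invr_ge0.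
  exists (Num.Def.archi_bound (S + `|A X|^-1)).
  have hb := archi_boundP (addr_ge0 S0 iA0).
  set rho := Num.Def.archi_bound _ in hb *.
  split; [|split].
  - move=> i j; apply: (le_trans (y := S)).
      apply: (le_trans (y := \sum_j `|X i j|)); first by apply: le_sum1.
      by apply: (le_sum1 (F := fun i => \sum_j `|X i j|)) => k; rewrite sumr_ge0.
    apply: (le_trans (y := rho%:R)); last by rewrite ler_nat.
    by apply: ltW; apply: le_lt_trans hb; rewrite lerDl.
  - have hA0 : 0 < `|A X| by rewrite normr_gt0.
    rewrite -[_^-1]mul1r ler_pdivrMr ?ltr0n // -ler_pdivrMl //.
    rewrite mulr1; apply: (le_trans (y := rho%:R)); last by rewrite ler_nat.
    by apply: ltW; apply: le_lt_trans hb; rewrite lerDr.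
  - by rewrite det_split // in hX; rewrite -[RHS]hX /A /B /r' /c' addrC mulrC.
apply: null2_union2 => //; first exact: IH.
apply: union_null2 => // rho.
set rr : R := rho.+1%:R.
have rr1 : 1 <= rr by rewrite ler1n.
set K1 : R := (s`!)%:R * (s%:R * rr ^+ s).
set K2 : R := (s.+1`!)%:R * (s.+1%:R * rr ^+ s.+1).
have K10 : 0 <= K1 by rewrite mulr_ge0 ?mulr_ge0 ?exprn_ge0 // (le_trans _ rr1).
have K20 : 0 <= K2 by rewrite mulr_ge0 ?mulr_ge0 ?exprn_ge0 // (le_trans _ rr1).
apply: (graph_null2 (K := K1 + K2)) => //; first exact: addr_ge0.
move=> X Y h h0 bX bY hXY; split.
  apply: (le_trans (det_lip rr1 h0 _ _ _)).
  - by move=> i j; rewrite mxE; apply: bX.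
  - by move=> i j; rewrite mxE; apply: bY.
  - move=> i j; rewrite !mxE; apply: (hXY (r' i, c' j)).
    apply/eqP => -[/ir]; move/eqP; by rewrite eq_sym (negbTE (neq_lift _ _)).
  by rewrite mulrA ler_wpM2r ?lerDl.
apply: (le_trans (det_lip rr1 h0 _ _ _)).
- by move=> i j; rewrite !mxE; case: ifP => _; [rewrite normr0 (le_trans _ rr1) | apply: bX].
- by move=> i j; rewrite !mxE; case: ifP => _; [rewrite normr0 (le_trans _ rr1) | apply: bY].
- move=> i j; rewrite !mxE; case: ifP => He; first by rewrite subrr normr0.
  by apply: (hXY (r i, c j)); rewrite He.
by rewrite mulrA ler_wpM2r ?lerDr.
Qed.

Definition generic (R : realType) d n (X : 'M[R]_(d,n)) :=
  forall s (r : 'I_s -> 'I_d) (c : 'I_s -> 'I_n), injective r -> injective c ->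
    \det (subm r c X) != 0.

Lemma nongeneric_null (R : realType) d n : (0 < d)%N -> (0 < n)%N ->
  null2 (fun X : 'M[R]_(d,n) => ~ generic X).
Proof.
move=> hd hn.
apply: (null2_sub (N' := fun X => exists s : nat, exists rc : {ffun 'I_s -> 'I_d} * {ffun 'I_s -> 'I_n},
   injective rc.1 /\ injective rc.2 /\ \det (subm rc.1 rc.2 X) = 0)).
  move=> X ng; apply: NNPP => H; apply: ng => s r c ir ic; apply/eqP => hdet.
  apply: H; exists s, ([ffun i => r i], [ffun i => c i]); split; [|split].
  - by move=> i j; rewrite !ffunE; apply: ir.
  - by move=> i j; rewrite !ffunE; apply: ic.
  - rewrite -hdet; congr (\det _); apply/matrixP => i j; by rewrite !mxE !ffunE.
apply: union_null2 => // s; apply: union_null2 => // rc.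
case: (classic (injective rc.1 /\ injective rc.2)) => [[i1 i2]|ni].
  apply: (null2_sub (N' := fun X => \det (subm rc.1 rc.2 X) = 0)).
    by move=> X [_ [_ ->]].
  exact: det_zero_null.
apply: (null2_sub (N' := fun _ => False)); last exact: null2_empty.
by move=> X [a [b _]]; apply: ni.
Qed.



Lemma solve_set (R : realType) d n (X : 'M[R]_(d,n)) : generic X ->
  forall (S : {set 'I_n}) (vl : 'I_n -> R), (#|S| <= d)%N ->
  exists z : 'rV[R]_d, forall j, j \in S -> (z *m X) 0 j = vl j.
Proof.
move=> gX S vl hS.
set s := #|S|.
pose c : 'I_s -> 'I_n := fun i => enum_val i.
pose r : 'I_s -> 'I_d := widen_ord hS.
have ic : injective c by apply: enum_val_inj.
have ir : injective r.
  by move=> i1 i2 h; apply: val_inj; move: (congr1 val h).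
set M := subm r c X.
have uM : M \in unitmx by rewrite unitmxE unitfE; apply: gX.
pose vr : 'rV[R]_s := \row_i vl (c i).
pose u := vr *m invmx M.
pose Sel : 'M[R]_(s, d) := \matrix_(i, l) (r i == l)%:R.
exists (u *m Sel) => j jS.
have SelX : forall i j', (Sel *m X) i j' = X (r i) j'.
  move=> i j'; rewrite mxE (bigD1 (r i)) //= big1 ?addr0; first by rewrite mxE eqxx mul1r.
  by move=> l /negbTE hl; rewrite mxE eq_sym hl mul0r.
set i0 := enum_rank_in jS j.
have hj : c i0 = j by rewrite /c /i0 enum_rankK_in.
rewrite -mulmxA -hj mxE.
have : (u *m M) 0 i0 = vr 0 i0.
  by have := mulmxKV uM vr; rewrite /u => /= ->.
rewrite mxE !mxE => <-; apply: eq_bigr => i _; by rewrite SelX !mxE.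
Qed.

Lemma sep_thresh (R : realType) (I : finType) (f : I -> R) (P : pred I) :
  (forall i j, P i -> ~~ P j -> f i < f j) ->
  exists tau, forall i, (f i < tau) = P i /\ f i != tau.
Proof.
move=> H.
set S := \sum_i `|f i|.
have fS : forall i, `|f i| <= S.
  by move=> i; rewrite /S (bigD1 i) //= lerDl sumr_ge0.
set lo := - S - 1; set hi := S + 1.
have flo : forall i, lo < f i.
  move=> i; have := fS i; rewrite ler_norml => /andP [h1 _]; rewrite /lo; lra.
have fhi : forall i, f i < hi.
  move=> i; have := fS i; rewrite ler_norml => /andP [_ h2]; rewrite /hi; lra.
have S0 : 0 <= S by rewrite sumr_ge0.
have lohi : lo < hi by rewrite /lo /hi; lra.
set M := \big[Num.max/lo]_(i | P i) f i.
set m := \big[Num.min/hi]_(i | ~~ P i) f i.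
have HM : forall i, P i -> f i <= M.
  by move=> i Pi; rewrite /M (bigD1 i) //= le_max lexx.
have Hm : forall j, ~~ P j -> m <= f j.
  by move=> j Pj; rewrite /m (bigD1 j) //= ge_min lexx.
have HmP : forall i, P i -> f i < m.
  move=> i Pi; apply: (big_ind (fun v => f i < v)) => //.
  - by move=> x y hx hy; rewrite lt_min hx hy.
  - by move=> j Pj; apply: H.
have Mm : M < m.
  apply: (big_ind (fun v => v < m)) => //.
  - apply: (big_ind (fun v => lo < v)) => //.
    by move=> x y hx hy; rewrite lt_min hx hy.
  - by move=> x y hx hy; rewrite gt_max hx hy.
exists ((M + m) / 2) => i; case Pi: (P i).
  have h : f i < (M + m) / 2.
    by apply: (le_lt_trans (HM i Pi)); rewrite ltr_pdivlMr //; lra.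
  by rewrite h lt_eqF.
have h : (M + m) / 2 < f i.
  apply: lt_le_trans (Hm i (negbT Pi)).
  by rewrite ltr_pdivrMr //; lra.
by rewrite ltNge (ltW h) gt_eqF.
Qed.

Lemma det2 (R : realType) (A : 'M[R]_2) : \det A = A 0 0 * A 1 1 - A 0 1 * A 1 0.
Proof.
rewrite (expand_det_row _ 0) !big_ord_recl big_ord0 /cofactor !det_mx11 !mxE /=.
have e1 : lift (0 : 'I_2) (0 : 'I_1) = 1 by apply: val_inj.
have e2 : lift (1 : 'I_2) (0 : 'I_1) = 0 by apply: val_inj.
have e3 : (lift ord0 ord0 : 'I_2) = 1 by apply: val_inj.
have e4 : (ord0 : 'I_2) = 0 by apply: val_inj.
rewrite ?e3 ?e2 ?e1 ?e4 /= expr0 expr1; ring.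
Qed.

Lemma lr_pos (R : realType) (al u : R) : al < 1 -> 0 < u -> leaky_relu al u = u.
Proof.
move=> a1 u0; rewrite /leaky_relu; apply/max_idPr.
by rewrite ger_pMl // ltW.
Qed.

Lemma lr_neg (R : realType) (al u : R) : al < 1 -> u < 0 -> leaky_relu al u = al * u.
Proof.
move=> a1 u0; rewrite /leaky_relu; apply/max_idPl.
by rewrite ler_nMl // ltW.
Qed.

Lemma blocks (R : realType) n d (f : 'I_n -> R) : (0 < d)%N ->
  (forall i j, i != j -> f i != f j) ->
  exists bl : 'I_n -> nat,
    (forall j, bl j * d < n)%N /\
    (forall i j, (bl i < bl j)%N -> f i < f j) /\
    (forall b, #|[set j | bl j == b]| <= d)%N.
Proof.
move=> d0 finj.
pose rk j := #|[set l | f l < f j]|.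
have rk_lt : forall i j, f i < f j -> (rk i < rk j)%N.
  move=> i j hij; apply: proper_card; apply/properP; split.
    by apply/subsetP => l; rewrite !inE => h; apply: lt_trans hij.
  by exists i; rewrite !inE // ltxx.
have rk_inj : injective rk.
  move=> i j hr; apply/eqP; apply/negPn/negP => hij.
  have := finj i j hij; rewrite neq_lt => /orP [] /rk_lt; by rewrite hr ltnn.
have rk_n : forall j, (rk j < n)%N.
  move=> j; rewrite -[n in (_ < n)%N]card_ord; apply: proper_card.
  by apply/properP; split; [apply/subsetP | exists j; rewrite !inE ?ltxx].
exists (fun j => (rk j %/ d)%N); split; [|split].
- by move=> j; apply: leq_ltn_trans (rk_n j); rewrite leq_trunc_div.
- move=> i j hb; have hij : i != j by apply/eqP => E; rewrite E ltnn in hb.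
  have := finj i j hij; rewrite neq_lt => /orP [] // /rk_lt /ltnW h.
  by have := leq_div2r d h; rewrite leqNgt hb.
- move=> b; set S := [set j | _].
  pose g (j : 'I_n) : 'I_d := Ordinal (ltn_pmod (rk j) d0).
  have ginj : {in S &, injective g}.
    move=> i j; rewrite !inE => /eqP hi /eqP hj /(congr1 val) /= hm.
    apply: rk_inj; rewrite (divn_eq (rk i) d) (divn_eq (rk j) d) hi hj hm //.
  by rewrite -(card_in_imset ginj) -[X in (_ <= X)%N](card_ord d) max_card.
Qed.

Lemma wX (R : realType) d n (X : 'M[R]_(d,n)) (i0 i1 : 'I_d) (tau : R) j :
  i0 != i1 ->
  ((\row_l (if l == i0 then tau else if l == i1 then -1 else 0) : 'rV[R]_d) *m X) 0 j
   = tau * X i0 j - X i1 j.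
Proof.
move=> hi; rewrite mxE (bigD1 i0) //= (bigD1 i1) 1?eq_sym //= big1.
  by rewrite !mxE eqxx eq_sym (negbTE hi) eqxx addr0 mulN1r.
by move=> l /andP [h1 h2]; rewrite mxE (negbTE h1) (negbTE h2) mul0r.
Qed.

Lemma construct (R : realType) (al : R) d n k (X : 'M[R]_(d,n)) (y : 'rV[R]_n) :
  0 < al -> al < 1 -> (2 <= d)%N -> (0 < k)%N -> (n <= k * d)%N -> generic X ->
  exists (W : 'M[R]_(2 * k, d)) (v : R), 0 < v /\ y = pm_vec k v *m sigma_mx al (W *m X).
Proof.
move=> a0 a1 d2 k0 nkd gX.
have d0 : (0 < d)%N by apply: leq_trans d2.
have d1 : (1 < d)%N by [].
set i0 : 'I_d := Ordinal d0; set i1 : 'I_d := Ordinal d1.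
have i01 : i0 != i1 by rewrite -val_eqE.
have hX0 : forall j, X i0 j != 0.
  move=> j; have := gX 1%N (fun _ => i0) (fun _ => j).
  rewrite det_mx11 mxE; apply.
  - by move=> a b _; rewrite !ord1.
  - by move=> a b _; rewrite !ord1.
pose ra j := X i1 j / X i0 j.
have rinj : forall i j, i != j -> ra i != ra j.
  move=> i j hij; apply/eqP => E.
  pose rr : 'I_2 -> 'I_d := fun t => if t == 0 then i0 else i1.
  pose cc : 'I_2 -> 'I_n := fun t => if t == 0 then i else j.
  have inj2 : forall (T : eqType) (a b : T), a != b ->
      injective (fun t : 'I_2 => if t == 0 then a else b).
    move=> T a b hab t1 t2.
    have h2 : forall t : 'I_2, t = 0 \/ t = 1.
      by case=> [[|[|]]] // ?; [left|right]; apply/val_inj.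
    have h10 : ((1 : 'I_2) == 0) = false by [].
    case: (h2 t1) => ->; case: (h2 t2) => -> //= E'; by rewrite E' eqxx in hab.
  have := gX 2%N rr cc (inj2 _ _ _ i01) (inj2 _ _ _ hij).
  rewrite det2 !mxE /rr /cc /=.
  move=> H; apply: (negP H); apply/eqP.
  move: E; rewrite /ra => /eqP; rewrite eqr_div ?hX0 // => /eqP E.
  rewrite mulrC [X i0 j * _]mulrC E; ring.
have [bl [hbl1 [hbl2 hbl3]]] := blocks d0 rinj.
have blk : forall j, (bl j < k)%N.
  by move=> j; rewrite -(ltn_pmul2r d0); apply: leq_trans nkd; exact: hbl1.
pose Ptau (g : nat) (t : R) := forall j, (ra j < t) = (bl j < g)%N /\ ra j != t.
pose tau (g : nat) := epsilon (inhabits (0 : R)) (Ptau g).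
have htau : forall g j, (ra j < tau g) = (bl j < g)%N /\ ra j != tau g.
  move=> g.
  have sepc : forall i j, (bl i < g)%N -> ~~ (bl j < g)%N -> ra i < ra j.
    move=> i j hi hj; apply: hbl2; rewrite -leqNgt in hj; exact: leq_trans hi hj.
  have [t Ht] := sep_thresh sepc.
  exact: (@epsilon_spec R (inhabits (0 : R)) (Ptau g) (ex_intro _ t Ht)).
pose w (g : nat) : 'rV[R]_d := \row_l (if l == i0 then tau g else if l == i1 then -1 else 0).
pose wx g j := (w g *m X) 0 j.
have hw : forall g j, wx g j = X i0 j * (tau g - ra j).
  by move=> g j; rewrite /wx wX // /ra; field; exact: hX0.
have hw0 : forall g j, wx g j != 0.
  move=> g j; rewrite hw mulf_neq0 ?hX0 // subr_eq0 eq_sym; by have [] := htau g j.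
have sgn : forall g j, (0 < wx g j) = ((0 < X i0 j) == (bl j < g)%N).
  move=> g j; rewrite hw; have [h1 _] := htau g j.
  have := lt_total (hX0 j); rewrite orbC => /orP [] hx.
    by rewrite pmulr_rgt0 // subr_gt0 h1 hx.
  rewrite nmulr_rgt0 // subr_lt0 (lt_gtF hx) /=.
  have [h1' h2] := htau g j.
  case hb: (bl j < g)%N; rewrite hb in h1'; first by rewrite (lt_gtF h1').
  by rewrite lt_neqAle eq_sym h2 /= leNgt h1'.
set Sb := fun b => [set j | bl j == b].
pose vL j := if 0 < X i0 j then y 0 j / al else y 0 j.
have [L hL] := solve_set gX vL (hbl3 k.-1).
pose vQ j := if 0 < X i0 j then ((L *m X) 0 j - y 0 j) / (1 - al)
             else (y 0 j - al * (L *m X) 0 j) / (1 - al).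
pose PQ (b : nat) (z : 'rV[R]_d) := forall j, j \in Sb b -> (z *m X) 0 j = vQ j.
pose Q (b : nat) := epsilon (inhabits (0 : 'rV[R]_d)) (PQ b).
have hQ : forall b, PQ b (Q b).
  move=> b; have [z Hz] := solve_set gX vQ (hbl3 b).
  exact: (@epsilon_spec _ (inhabits (0 : 'rV[R]_d)) (PQ b) (ex_intro _ z Hz)).
pose Pn (b : nat) := if b == k.-1 then L else Q b.
pose P' (m : nat) := if m is m'.+1 then Pn m' else 0.
pose Dg (g : nat) := P' g.+1 - P' g.
pose dx g j := (Dg g *m X) 0 j.
pose t : R := 1 + \sum_(g < k) \sum_j `|dx g j| / `|wx g j|.
have ht : forall g j, (g < k)%N -> `|dx g j| < t * `|wx g j|.
  move=> g j gk.
  have wpos : 0 < `|wx g j| by rewrite normr_gt0.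
  have h1 : `|dx g j| / `|wx g j| <= \sum_(g < k) \sum_j `|dx g j| / `|wx g j|.
    apply: (le_trans (y := \sum_j `|dx (Ordinal gk) j| / `|wx (Ordinal gk) j|)).
      by apply: (le_sum1 (F := fun j => `|dx g j| / `|wx g j|)) => j'; rewrite divr_ge0.
    apply: (le_sum1 (F := fun g : 'I_k => \sum_j `|dx g j| / `|wx g j|)) => g'.
    by rewrite sumr_ge0 // => j' _; rewrite divr_ge0.
  have : `|dx g j| / `|wx g j| < t by rewrite /t; lra.
  by rewrite ltr_pdivrMr // mulrC.
have t0 : 0 < t.
  rewrite /t ltr_pwDl //; rewrite sumr_ge0 // => g _; rewrite sumr_ge0 // => j _.
  by rewrite divr_ge0.
pose Wn (i : nat) : 'rV[R]_d := if (i < k)%N then t *: w i + Dg i else t *: w (i - k)%N.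
exists (\matrix_(i < 2 * k, l < d) Wn i 0 l), 1; split => //.
apply/rowP => j; rewrite !mxE.
pose F (i : nat) := (if (i < k)%N then 1 else -1) * leaky_relu al ((Wn i *m X) 0 j).
have -> : \sum_(i < 2 * k) pm_vec k 1 0 i * sigma_mx al (\matrix_(i0, l) Wn i0 0 l *m X) i j
    = \sum_(i < 2 * k) F i.
  apply: eq_bigr => i _; rewrite /F !mxE; congr (_ * leaky_relu al _).
  by apply: eq_bigr => l _; rewrite mxE.
rewrite -(big_mkord xpredT F) (big_cat_nat _ (n := k)) //=; last by rewrite leq_pmull.
have -> : \sum_(k <= i < 2 * k) F i = \sum_(0 <= i < k) F (i + k)%N.
  by rewrite -{1}(add0n k) big_addn mul2n -addnn addnK.
rewrite -big_split /=.
pose c g := if 0 < wx g j then 1 else al.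
have Hg : forall g, (0 <= g < k)%N -> F g + F (g + k)%N = c g * dx g j.
  move=> g /andP [_ gk]; have gk' : (g + k < k)%N = false by rewrite ltnNge leq_addl.
  rewrite /F gk gk' /Wn gk gk' addnK.
  have e1 : ((t *: w g + Dg g) *m X) 0 j = t * wx g j + dx g j.
    by rewrite mulmxDl -scalemxAl [LHS]mxE [X in X + _]mxE.
  have e2 : ((t *: w g) *m X) 0 j = t * wx g j by rewrite -scalemxAl mxE.
  rewrite mul1r mulN1r e1 e2.
  have := ht g j gk; rewrite /c; case: ifP => hw'.
    rewrite (gtr0_norm hw') => hd.
    have p1 : 0 < t * wx g j by rewrite mulr_gt0.
    have p2 : 0 < t * wx g j + dx g j.
      move: hd; rewrite ltr_norml => /andP [hd1 _]; lra.
    by rewrite !lr_pos // mul1r addrAC subrr add0r.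
  have hn : wx g j < 0 by rewrite lt_neqAle hw0 leNgt hw'.
  rewrite (ltr0_norm hn) => hd.
  have p1 : t * wx g j < 0 by rewrite pmulr_rlt0.
  have p2 : t * wx g j + dx g j < 0.
    move: hd; rewrite ltr_norml => /andP [_ hd2]; lra.
  by rewrite !lr_neg //; ring.
rewrite (eq_big_nat _ _ Hg).
set be := bl j.
have bk : (be < k)%N := blk j.
rewrite (big_cat_nat _ (n := be.+1)) //=.
set clo := if 0 < X i0 j then al else 1.
set chi := if 0 < X i0 j then 1 else al.
have Hlo : forall g, (0 <= g < be.+1)%N -> c g * dx g j = clo * dx g j.
  move=> g /andP [_ hg]; rewrite /c sgn.
  have -> : (bl j < g)%N = false by rewrite ltnNge -ltnS hg.
  by rewrite /clo; case: (0 < X i0 j).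
have Hhi : forall g, (be.+1 <= g < k)%N -> c g * dx g j = chi * dx g j.
  move=> g /andP [hg _]; rewrite /c sgn hg /chi.
  by case: (0 < X i0 j).
rewrite (eq_big_nat _ _ Hlo) (eq_big_nat _ _ Hhi) -!mulr_sumr.
pose p m := (P' m *m X) 0 j.
have Htel : forall m1 m2, (m1 <= m2)%N -> \sum_(m1 <= g < m2) dx g j = p m2 - p m1.
  move=> m1 m2 hm; rewrite -telescope_sumr //; apply: eq_bigr => g _.
  by rewrite /dx /Dg /p mulmxBl !mxE.
rewrite !Htel // ?ltnW //.
have p0 : p 0%N = 0 by rewrite /p /= mul0mx mxE.
have pk : p k = (L *m X) 0 j.
  have kk : k = k.-1.+1 by rewrite prednK.
  by rewrite /p kk /= /Pn eqxx.
rewrite p0 pk subr0 /p /= /Pn.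
have jS : j \in Sb be by rewrite inE.
have al0 : al != 0 by rewrite gt_eqF.
have al1 : 1 - al != 0 by rewrite subr_eq0 eq_sym lt_eqF.
case: eqP => [Eb|Nb].
  rewrite Eb in jS; rewrite (hL j jS) /vL /clo /chi.
  by case: ifP => _; field.
rewrite (hQ be j jS) /vQ /clo /chi.
by case: ifP => _; field.
Qed.


Unset Implicit Arguments.

Theorem theorem5 (R : realType) (alpha : R) (d n k : nat) :
  0 < alpha -> alpha < 1 ->
  (2 <= d)%N -> (1 <= n)%N -> (2 * ceildiv n (2 * d - 2) <= k)%N ->
  forall y : 'rV[R]_n, (forall j, y 0 j = 1 \/ y 0 j = -1) ->
  exists N : 'M[R]_(d, n) -> Prop, lebesgue_null N /\
    forall X : 'M[R]_(d, n), ~ N X ->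
      exists (W : 'M[R]_(2 * k, d)) (v : R), 0 < v /\
        y = pm_vec k v *m sigma_mx alpha (W *m X).
Proof.
move=> a0 a1 d2 n1 hk y _.
have d0 : (0 < d)%N by apply: leq_trans d2.
exists (fun X => ~ generic X); split.
  by apply: null2_null; apply: nongeneric_null.
move=> X hX; have gX : generic X by apply: NNPP.
set b := (2 * d - 2)%N.
have b0 : (0 < b)%N by rewrite /b; lia.
have hc := ltn_ceil (n + b.-1) b0.
move: hk; rewrite /ceildiv -/b.
set q := ((n + b.-1) %/ b)%N => hk.
have hnq : (n <= q * b)%N by move: hc; rewrite /b; nia.
apply: construct => //.
- by move: hnq; rewrite /b; nia.
- by move: hnq; rewrite /b; nia.
Qed.
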